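(* Let $N\ge1$, let the parameter space $\Theta$ of the correlated Bernoulli random graph model be nondegenerate, let $g:\Theta\to\mathbb{R}$, and let $S:\mathcal{X}\to\mathbb{R}$ be an unbiased estimator of $g(\theta)$ (i.e. $\mathbb{E}_\theta(S)=g(\theta)$ for all $\theta\in\Theta$). Then a statistic $T:\mathcal{X}\to\mathbb{R}$ is an unbiased estimator of $g(\theta)$ if and only if $\overline{T}=\overline{S}$. In particular, $\overline{S}$ is an unbiased estimator of $g(\theta)$.
   Context: Correlated Bernoulli random graph model: fix a positive integer $N$ and let $\mathcal{R}=\{(p_1,\dots,p_N,\varrho_1,\dots,\varrho_N): p_i,\varrho_i\in[0,1]\}$. A parameter space is any subset $\Theta\subseteq\mathcal{R}$. For $\theta\in\Theta$, the random vectors $X,Y\in\{0,1\}^N$ are such that the pairs $(X_i,Y_i)$ are independent across $i$; $X_i,Y_i$ are each marginally Bernoulli$(p_i)$ with Pearson correlation $\varrho_i$ (so $\mathbb{P}(X_i=Y_i=1)=p_i^2+\varrho_ip_i(1-p_i)$, $\mathbb{P}(X_i=Y_i=0)=(1-p_i)^2+\varrho_ip_i(1-p_i)$, $\mathbb{P}(X_i=1,Y_i=0)=\mathbb{P}(X_i=0,Y_i=1)=(1-\varrho_i)p_i(1-p_i)$). Sample space $\mathcal{X}=\{(x,y):x,y\in\{0,1\}^N\}$. Let $\mathcal{R}^o=\{(p_1,\dots,p_N,0,\dots,0):p_i\in\mathbb{R}\}$; $\Theta$ is nondegenerate if $\Theta\cap\mathcal{R}^o$ has an interior point relative to $\mathcal{R}^o$.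 The disagreement vector $\mathcal{H}:\mathcal{X}\to\{0,\star,1\}^N$ has $i$th component $1$ if $x_i=y_i=1$, $0$ if $x_i=y_i=0$, $\star$ if $x_i\neq y_i$; for $h\in\{0,\star,1\}^N$ the disagreement class is $\mathcal{X}_h=\mathcal{H}^{-1}(h)$. For a statistic $S:\mathcal{X}\to\mathbb{R}$, its balanced variant $\overline{S}:\mathcal{X}\to\mathbb{R}$ is defined by $\overline{S}(x,y)=\frac{1}{|\mathcal{X}_h|}\sum_{(x',y')\in\mathcal{X}_h}S(x',y')$ where $h=\mathcal{H}(x,y)$. *)

(* Defs.v *)
From HB Require Import structures.
From mathcomp Require Import all_boot all_order all_algebra.
From mathcomp Require Import reals.
Set Implicit Arguments. Unset Strict Implicit. Unset Printing Implicit Defensive.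
Import Order.TTheory GRing.Theory Num.Theory.
Local Open Scope ring_scope.

Section CBRG.
Variables (R : realType) (N : nat).

(* A parameter theta = (p, rho), p rho : 'I_N -> R. *)
Definition param := ({ffun 'I_N -> R} * {ffun 'I_N -> R})%type.

Definition sample := ({ffun 'I_N -> bool} * {ffun 'I_N -> bool})%type.

Definition in_calR (th : param) : Prop :=
  forall i, 0 <= th.1 i <= 1 /\ 0 <= th.2 i <= 1.

(* Probability of (X_i, Y_i) = (a, b) with marginals Bernoulli(p), correlation r. *)
Definition pair_prob (p r : R) (a b : bool) : R :=
  match a, b with
  | true, true => p ^+ 2 + r * p * (1 - p)
  | false, false => (1 - p) ^+ 2 + r * p * (1 - p)
  | _, _ => (1 - r) * p * (1 - p)
  end.

Definition cbrg_prob (th : param) (z : sample) : R :=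
  \prod_(i < N) pair_prob (th.1 i) (th.2 i) (z.1 i) (z.2 i).

Definition cbrg_expect (th : param) (S : sample -> R) : R :=
  \sum_(z : sample) S z * cbrg_prob th z.

(* Nondegenerate: Theta meets R^o = {(p,0)} in a point interior relative to R^o. *)
Definition cbrg_nondegenerate (Theta : param -> Prop) : Prop :=
  exists p0 : {ffun 'I_N -> R}, exists e : R, 0 < e /\
    forall q : {ffun 'I_N -> R}, (forall i, `|q i - p0 i| < e) ->
      Theta (q, [ffun => 0]).

(* Disagreement vector: Some b if x_i = y_i = b, None (the symbol star) if x_i <> y_i. *)
Definition disagreement (z : sample) : {ffun 'I_N -> option bool} :=
  [ffun i => if z.1 i == z.2 i then Some (z.1 i) else None].

Definition dclass (h : {ffun 'I_N -> option bool}) : {set sample} :=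
  [set z | disagreement z == h].

Definition cbrg_balanced (S : sample -> R) (z : sample) : R :=
  (#|dclass (disagreement z)|%:R)^-1 *
    \sum_(z' in dclass (disagreement z)) S z'.

Definition cbrg_unbiased (Theta : param -> Prop) (g : param -> R) (T : sample -> R) : Prop :=
  forall th, Theta th -> cbrg_expect th T = g th.

End CBRG.

(* Main.v *)
Require Import Defs.
From HB Require Import structures.
From mathcomp Require Import all_boot all_order all_algebra.
From mathcomp Require Import reals.
From mathcomp Require Import ring lra.
From Stdlib Require Import FunctionalExtensionality.
Set Implicit Arguments. Unset Strict Implicit. Unset Printing Implicit Defensive.
Import Order.TTheory GRing.Theory Num.Theory.
Local Open Scope ring_scope.

Section Pf.
Variables (R : realType) (N : nat).

Definition cls (a b : bool) : option bool := if a == b then Some a else None.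

Lemma disagreementE (z : sample N) i : disagreement z i = cls (z.1 i) (z.2 i).
Proof. by rewrite /disagreement ffunE. Qed.

Lemma pair_prob_cls (p r : R) a b a' b' :
  cls a b = cls a' b' -> pair_prob p r a b = pair_prob p r a' b'.
Proof. by case: a; case: b; case: a'; case: b'. Qed.

Lemma prob_dis (th : param R N) z z' :
  disagreement z = disagreement z' -> cbrg_prob th z = cbrg_prob th z'.
Proof.
move=> e; apply: eq_bigr => i _; apply: pair_prob_cls.
by rewrite -!disagreementE e.
Qed.

Lemma expect_balanced (th : param R N) F :
  cbrg_expect th (cbrg_balanced F) = cbrg_expect th F.
Proof.
rewrite /cbrg_expect /cbrg_balanced.
transitivity (\sum_z \sum_z' ((disagreement z' == disagreement z)%:R *
   (#|dclass (disagreement z')|%:R)^-1 * (F z' * cbrg_prob th z'))).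
  apply: eq_bigr => z _.
  rewrite big_mkcond mulr_sumr mulr_suml; apply: eq_bigr => z' _.
  rewrite /dclass inE; case: eqP => [e|_].
    by rewrite e (prob_dis th e) mul1r mulrA.
  by rewrite /= mulr0 !mul0r.
rewrite exchange_big /=; apply: eq_bigr => z' _.
rewrite -!mulr_suml.
have -> : \sum_z ((disagreement z' == disagreement z)%:R : R) =
          #|dclass (disagreement z')|%:R.
  transitivity (\sum_(z in dclass (disagreement z')) (1:R)); last by rewrite sumr_const.
  rewrite [RHS]big_mkcond /=; apply: eq_bigr => z _.
  by rewrite /dclass inE eq_sym; case: eqP.
have hpos : (0 < #|dclass (disagreement z')|)%N.
  by apply/card_gt0P; exists z'; rewrite inE.
by rewrite mulfV ?mul1r // pnatr_eq0 -lt0n.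
Qed.

Definition phi (c : option bool) (q : R) : R :=
  match c with Some true => q ^+ 2 | Some false => (1 - q) ^+ 2 | None => q * (1 - q) end.

Lemma pp0 (q : R) a b : pair_prob q 0 a b = phi (cls a b) q.
Proof. by case: a; case: b; rewrite /= ?mul0r ?addr0 ?subr0 ?mul1r. Qed.

Definition pt (p d : R) (k : 'I_3) : R :=
  if val k == 0%N then p else if val k == 1%N then p + d else p - d.

Definition Icoef (p d y : R) (k : 'I_3) : R :=
  let s := y - p in
  if val k == 0%N then 1 - s ^+ 2 / d ^+ 2
  else if val k == 1%N then s / (2 * d) + s ^+ 2 / (2 * d ^+ 2)
  else - s / (2 * d) + s ^+ 2 / (2 * d ^+ 2).

Definition Dcoef (p d y : R) (k : 'I_3) : R :=
  let s := y - p in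
  if val k == 0%N then - 2 * s / d ^+ 2
  else if val k == 1%N then 1 / (2 * d) + s / d ^+ 2
  else - 1 / (2 * d) + s / d ^+ 2.

Definition lam (p d : R) (c : option bool) (k : 'I_3) : R :=
  match c with
  | Some true => Icoef p d 1 k
  | Some false => Icoef p d 0 k
  | None => Dcoef p d 0 k + 2 * Icoef p d 0 k
  end.

Lemma lam_key (p d : R) c c' : d != 0 ->
  \sum_(k < 3) lam p d c k * phi c' (pt p d k) = (c == c')%:R.
Proof.
move=> d0; rewrite !big_ord_recl big_ord0 /=.
have h2 : (2 : R) != 0 by rewrite pnatr_eq0.
case: c => [[]|]; case: c' => [[]|];
  rewrite /lam /Icoef /Dcoef /pt /=; field; by rewrite ?mulf_neq0 ?expf_neq0.
Qed.

Lemma Bkey (F : sample N -> R) (p0 : {ffun 'I_N -> R}) (e : R) : 0 < e ->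
  (forall q : {ffun 'I_N -> R}, (forall i, `|q i - p0 i| < e) ->
     cbrg_expect (q, [ffun => 0]) F = 0) ->
  forall h, \sum_(z in dclass h) F z = 0.
Proof.
move=> e0 H h.
set d := e / 2.
have dpos : 0 < d by rewrite /d; lra.
have d0 : d != 0 by rewrite gt_eqF.
pose qf (f : {ffun 'I_N -> 'I_3}) := [ffun i => pt (p0 i) d (f i)].
have key : \sum_(f : {ffun 'I_N -> 'I_3})
    (\prod_i lam (p0 i) d (h i) (f i)) * cbrg_expect (qf f, [ffun => 0]) F
    = \sum_(z in dclass h) F z.
  rewrite /cbrg_expect.
  under eq_bigr do rewrite mulr_sumr.
  rewrite exchange_big /= [RHS]big_mkcond /=; apply: eq_bigr => z _.
  transitivity (F z * \sum_(f : {ffun 'I_N -> 'I_3}) \prod_i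
     (lam (p0 i) d (h i) (f i) * phi (disagreement z i) (pt (p0 i) d (f i)))).
    rewrite mulr_sumr; apply: eq_bigr => f _.
    rewrite /cbrg_prob mulrCA; congr (_ * _); rewrite -big_split /=.
    apply: eq_bigr => i _; by rewrite !ffunE pp0.
  rewrite -(bigA_distr_bigA (fun i (k : 'I_3) =>
     lam (p0 i) d (h i) k * phi (disagreement z i) (pt (p0 i) d k))) /=.
  under eq_bigr do rewrite lam_key //.
  rewrite /dclass inE; case: eqP => [<-|ne].
    by rewrite big1 ?mulr1 // => i _; rewrite eqxx.
  case: (pickP (fun i => h i != disagreement z i)) => [i hi|hn].
    by rewrite (bigD1 i) //= (negbTE hi) mul0r mulr0.
  exfalso; apply: ne; apply/ffunP => i; apply/eqP.
  by move: (hn i) => /= /negbFE /eqP ->.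
rewrite -key big1 // => f _; rewrite H ?mulr0 // => i.
rewrite ffunE /pt; case: ifP => _; first by rewrite subrr normr0.
case: ifP => _.
  by rewrite addrAC subrr add0r gtr0_norm // /d; lra.
by rewrite addrAC subrr add0r normrN gtr0_norm // /d; lra.
Qed.

End Pf.

Theorem theorem2 (R : realType) (N : nat) (hN : (0 < N)%N)
  (Theta : param R N -> Prop)
  (hTheta : forall th, Theta th -> in_calR th)
  (hnd : cbrg_nondegenerate Theta)
  (g : param R N -> R) (S : sample N -> R)
  (hS : cbrg_unbiased Theta g S) :
  (forall T : sample N -> R,
     cbrg_unbiased Theta g T <-> cbrg_balanced T = cbrg_balanced S)
  /\ cbrg_unbiased Theta g (cbrg_balanced S).
Proof.
have S2 : cbrg_unbiased Theta g (cbrg_balanced S).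
  by move=> th hth; rewrite expect_balanced hS.
split=> // T; split.
  move=> hT; apply: functional_extensionality => z.
  rewrite /cbrg_balanced; congr (_ * _); apply/eqP; rewrite -subr_eq0 -sumrB.
  apply/eqP; case: hnd => p0 [e [e0 hq]].
  apply: (@Bkey R N (fun z => T z - S z) p0 e e0) => q hqb.
  rewrite /cbrg_expect; under eq_bigr do rewrite mulrBl.
  by rewrite sumrB -/(cbrg_expect _ T) -/(cbrg_expect _ S) hT ?hS ?subrr //; apply: hq.
move=> hb th hth.
by rewrite -expect_balanced hb expect_balanced; apply: hS.
Qed.
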